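(* Let $d>k\ge3$ and $a\ge1$ be integers with $d-a^k\ge1$. Let $X=X_\Sigma$ be the smooth projective toric $d$-fold whose fan has ray generators $x_1,\dots,x_d,y_1,y_2$ and primitive relations $x_1+\cdots+x_d=ay_1$ and $y_1+y_2=0$ (so $X\cong\mathbb{P}_{\mathbb{P}^{d-1}}(\mathcal{O}(a)\oplus\mathcal{O})$). Then: (1) if $k$ is odd, $\mathrm{ch}_k(X)$ is positive; (2) if $k$ is even, $\mathrm{ch}_k(X)$ is nef but not positive.
   Context: For a smooth complete toric variety $X$ of dimension $d$ with torus invariant prime divisors $D_1,\dots,D_n$, $\mathrm{ch}_k(X)=\frac{1}{k!}\sum_i D_i^k$. For $1\le k\le d$, $\mathrm{ch}_k(X)$ is nef (resp. positive) if $(\mathrm{ch}_k(X)\cdot Y)\ge0$ (resp. $>0$) for every $k$-dimensional torus invariant irreducible closed subvariety $Y\subset X$. A primitive collection is a set of ray generators not generating a cone of the fan while every proper subset does; its primitive relation expresses the sum of its elements as a positive integer combination of the generators of the smallest cone containing that sum. *)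

(* Defs.v *)
From HB Require Import structures.
From mathcomp Require Import all_boot all_order all_algebra.
Set Implicit Arguments. Unset Strict Implicit. Unset Printing Implicit Defensive.
Import Order.TTheory GRing.Theory Num.Theory.
Local Open Scope ring_scope.

(* A (simplicial) fan in N = Z^d with n rays is given by the ray generators *)
(* [gen i : 'I_d -> int] (i : 'I_n) and a predicate [cone] on subsets of    *)
(* rays (S is a cone of the fan iff cone S).  Torus-invariant prime         *)
(* divisors D_i correspond to rays.  A monomial D^m = prod_i D_i^(m i) is   *)
(* an exponent vector m : {ffun 'I_n -> nat}.                               *)

Definition supp (n : nat) (m : {ffun 'I_n -> nat}) : {set 'I_n} :=
  [set i | m i != 0%N].

Definition mdeg (n : nat) (m : {ffun 'I_n -> nat}) : nat := (\sum_i m i)%N.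

(* m * D_i *)
Definition mshift (n : nat) (m : {ffun 'I_n -> nat}) (i : 'I_n) : {ffun 'I_n -> nat} :=
  [ffun j => (m j + (j == i))%N].

(* the squarefree monomial prod_{j in S} D_j *)
Definition mind (n : nat) (S : {set 'I_n}) : {ffun 'I_n -> nat} :=
  [ffun j => nat_of_bool (j \in S)].

(* [deg] is the degree map A^d(X) -> Z (valued in Q) on top-degree monomials
   of the Chow ring  Z[D_1..D_n] / (Stanley-Reisner ideal + linear relations)
   of the smooth complete toric variety:
   - monomials whose support is not a cone vanish (Stanley--Reisner),
   - for every m of degree d-1 and u in the dual lattice M,
     sum_i <u, v_i> deg (m D_i) = 0 (linear equivalence),
   - the product of the d distinct divisors of a maximal (smooth) cone is 1. *)
Definition is_degree_map (n d : nat) (gen : 'I_n -> 'I_d -> int)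
    (cone : {set 'I_n} -> bool) (deg : {ffun 'I_n -> nat} -> rat) : Prop :=
  [/\ (forall m, mdeg m = d -> ~~ cone (supp m) -> deg m = 0),
      (forall m (u : 'I_d -> int), (mdeg m).+1 = d ->
          \sum_i ((\sum_j u j * gen i j) %:~R) * deg (mshift m i) = 0)
    & (forall S, cone S -> #|S| = d -> deg (mind S) = 1)].

(* (ch_k(X) . V(S)) = (1/k!) sum_i (D_i^k . prod_{j in S} D_j), where V(S) is
   the torus-invariant subvariety attached to the cone S. *)
Definition ch_dot (n : nat) (deg : {ffun 'I_n -> nat} -> rat) (k : nat)
    (S : {set 'I_n}) : rat :=
  (k`!%:R)^-1 * \sum_i deg [ffun j => (k * (j == i) + (j \in S))%N].

(* k-dimensional torus-invariant irreducible closed subvarieties are the V(S)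
   for the cones S of dimension d - k. *)
Definition ch_nef (n d : nat) (cone : {set 'I_n} -> bool)
    (deg : {ffun 'I_n -> nat} -> rat) (k : nat) : Prop :=
  forall S, cone S -> (#|S| + k)%N = d -> 0 <= ch_dot deg k S.

Definition ch_positive (n d : nat) (cone : {set 'I_n} -> bool)
    (deg : {ffun 'I_n -> nat} -> rat) (k : nat) : Prop :=
  forall S, cone S -> (#|S| + k)%N = d -> 0 < ch_dot deg k S.

(* Rays indexed by 'I_(d+2): i < d is x_(i+1), i = d is y_1, i = d+1 is y_2. *)
(* In N = Z^d (basis e_0..e_(d-1)):                                         *)
(*   x_(i+1) = e_i (i < d-1),  x_d = -(e_0+...+e_(d-2)) + a e_(d-1),        *)
(*   y_1 = e_(d-1),  y_2 = -e_(d-1),                                        *)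
(* so that x_1+...+x_d = a y_1 and y_1 + y_2 = 0.                           *)
(* The cones are the subsets containing neither primitive collection        *)
(* {x_1,...,x_d} nor {y_1,y_2}.                                             *)

Definition Xgen (d a : nat) (i : 'I_d.+2) (j : 'I_d) : int :=
  if (i < d.-1)%N then ((nat_of_ord i == nat_of_ord j) : nat)%:Z
  else if nat_of_ord i == d.-1 then
         (if (j < d.-1)%N then -1 else a%:Z)
  else if nat_of_ord i == d then ((nat_of_ord j == d.-1) : nat)%:Z
  else - ((nat_of_ord j == d.-1) : nat)%:Z.

Definition Xcone (d : nat) (S : {set 'I_d.+2}) : bool :=
  ~~ ([set i : 'I_d.+2 | (i < d)%N] \subset S) &&
  ~~ ([set i : 'I_d.+2 | (d <= i)%N] \subset S).

(* Main.v *)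
Require Import Defs.
From HB Require Import structures.
From mathcomp Require Import all_boot all_order all_algebra.
From mathcomp Require Import zify ring lra.
Import Order.TTheory GRing.Theory Num.Theory.
Local Open Scope ring_scope.

Section X.
Variables (e a : nat).
Local Notation mon := {ffun 'I_e.+3 -> nat}.

Lemma le_e3 : (e <= e.+3)%N. Proof. by rewrite !leqW. Qed.
Definition xl : 'I_e.+3 := Ordinal (ltnW (ltnW (ltnSn e.+2))).
Definition y1 : 'I_e.+3 := Ordinal (ltnW (ltnSn e.+2)).
Definition y2 : 'I_e.+3 := Ordinal (ltnSn e.+2).
Definition wx (i : 'I_e) : 'I_e.+3 := widen_ord le_e3 i.
Definition w (m : {ffun 'I_e.+3 -> nat}) : nat := (\sum_(i < e) m (wx i))%N.
Definition cm (h p q : nat) : {ffun 'I_e.+3 -> nat} :=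
  [ffun j : 'I_e.+3 => if (val j < e)%N then 0%N else if val j == e then h
     else if val j == e.+1 then p else q].
Definition V (p q : nat) : rat :=
  if (0 < p)%N && (0 < q)%N then 0 else if (0 < p)%N then (- a%:R) ^+ p.-1
  else if (0 < q)%N then a%:R ^+ q.-1 else 0.

Lemma mdeg_split (m : mon) : mdeg m = (w m + m xl + m y1 + m y2)%N.
Proof.
rewrite /mdeg !big_ord_recr /= /w.
congr (_ + _ + _ + _)%N; first (apply: eq_bigr => i _); congr (m _); exact: val_inj.
Qed.

Lemma sum_ind (T : finType) (P : pred T) (i : T) :
  (\sum_(j | P j) ((j == i) : nat))%N = P i.
Proof.
case Pi: (P i).
  rewrite (bigD1 i) //= eqxx big1 // => j /andP [_ /negbTE ->] //.
by rewrite big1 // => j Pj; case: eqP => // ji; move: Pj; rewrite ji Pi.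
Qed.

Lemma mdeg_shift (m : mon) i : mdeg (mshift m i) = (mdeg m).+1.
Proof.
rewrite /mdeg; under eq_bigr do rewrite ffunE.
by rewrite big_split /= (sum_ind _ xpredT) addn1.
Qed.

Lemma w_shift (m : mon) i : w (mshift m i) = (w m + (val i < e))%N.
Proof.
rewrite /w; under eq_bigr do rewrite ffunE.
rewrite big_split /=; congr (_ + _)%N.
case: (ltnP (val i) e) => hi.
  rewrite (bigD1 (Ordinal hi)) //= (_ : wx _ == i); last by apply/eqP/val_inj.
  rewrite big1 // => j hj; apply/eqP; rewrite eqb0; apply/negP => /eqP /(congr1 val) /= hv.
  by move: hj; rewrite (_ : j = Ordinal hi) ?eqxx //; apply: val_inj.
rewrite big1 // => j _; apply/eqP; rewrite eqb0; apply/negP => /eqP hv.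
by move: (ltn_ord j); rewrite -[X in (X < _)%N]/(val (wx j)) hv ltnNge hi.
Qed.


Lemma le_e13 : (e.+1 <= e.+3)%N. Proof. exact: (leq_trans (leqnSn _) (leqnSn _)). Qed.
Definition xj (j : 'I_e.+1) : 'I_e.+3 := widen_ord le_e13 j.

Lemma sumX (F : 'I_e.+3 -> rat) (j : 'I_e.+1) :
  \sum_(i < e.+3) ((Xgen a i j)%:~R * F i) =
  if (val j < e)%N then F (xj j) - F xl else a%:R * F xl + F y1 - F y2.
Proof.
rewrite !big_ord_recr /=.
rewrite /Xgen /=.
have ->: widen_ord (leqnSn e.+2) (widen_ord (leqnSn e.+1) (@ord_max e)) = xl by apply: val_inj.
have ->: widen_ord (leqnSn e.+2) (@ord_max e.+1) = y1 by apply: val_inj.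
have ->: (@ord_max e.+2) = y2 by apply: val_inj.
have L1 : (e.+1 < e)%N = false by rewrite ltnNge leqnSn.
have L2 : (e.+2 < e)%N = false by rewrite ltnNge leqW.
rewrite ltnn eqxx L1 L2 (gtn_eqF (ltnSn e)) (gtn_eqF (leqW (ltnSn e))) (gtn_eqF (ltnSn e.+1)) eqxx.
under eq_bigr => i _ do rewrite ltn_ord.
case: (ltnP (val j) e) => hj.
  rewrite (ltn_eqF hj) (bigD1 (Ordinal hj)) //= eqxx big1; last first.
    move=> i hi; rewrite (_ : (val i == val j) = false) ?mulr0n ?mul0r //.
    by apply/negbTE; apply: contra hi => /eqP h; apply/eqP/val_inj.
  rewrite (_ : widen_ord _ _ = xj j); last exact: val_inj.
  by rewrite /= mul1r mul0r oppr0 mul0r !addr0 mulN1r.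
have hj' : val j = e by apply/eqP; rewrite eqn_leq hj -ltnS ltn_ord.
rewrite hj' eqxx big1 ?add0r; last first.
  by move=> i _; rewrite (ltn_eqF (ltn_ord i)) mul0r.
by rewrite /= mul1r mulN1r.
Qed.


Lemma sum_delta (i : 'I_e.+3) (j : 'I_e.+1) :
  \sum_(j' < e.+1) (((j' == j) : nat)%:Z * Xgen a i j') = Xgen a i j.
Proof.
rewrite (bigD1 j) //= eqxx mul1r big1 ?addr0 // => j' /negbTE ->; by rewrite mul0r.
Qed.

Definition isdeg (deg : mon -> rat) := is_degree_map (@Xgen e.+1 a) (@Xcone e.+1) deg.

Lemma rel deg (m : mon) (j : 'I_e.+1) : isdeg deg -> mdeg m = e ->
  (if (val j < e)%N then deg (mshift m (xj j)) - deg (mshift m xl)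
   else a%:R * deg (mshift m xl) + deg (mshift m y1) - deg (mshift m y2)) = 0.
Proof.
move=> [_ H2 _] hm.
have := H2 m (fun j' => ((j' == j) : nat)%:Z); rewrite hm => /(_ erefl).
under eq_bigr => i _ do rewrite sum_delta.
by rewrite sumX.
Qed.

Lemma relx deg (m : mon) (j : 'I_e.+1) : isdeg deg -> mdeg m = e -> (val j < e)%N ->
  deg (mshift m (xj j)) = deg (mshift m xl).
Proof. by move=> hd hm hj; apply/eqP; rewrite -subr_eq0; have := @rel deg m j hd hm; rewrite hj => ->. Qed.

Lemma rely deg (m : mon) : isdeg deg -> mdeg m = e ->
  a%:R * deg (mshift m xl) + deg (mshift m y1) - deg (mshift m y2) = 0.
Proof.
move=> hd hm; have := @rel deg m (@ord_max e) hd hm; by rewrite /= ltnn.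
Qed.


Lemma relx' deg (m : mon) (i : 'I_e.+3) : isdeg deg -> mdeg m = e -> (val i < e)%N ->
  deg (mshift m i) = deg (mshift m xl).
Proof.
move=> hd hm hi; have hi' : (val i < e.+1)%N by apply: ltnW.
have := @relx deg m (Ordinal hi') hd hm hi.
by rewrite (_ : xj _ = i) //; apply: val_inj.
Qed.

Lemma xl_neq (i : 'I_e.+3) : (val i < e)%N -> (xl == i) = false.
Proof. by move=> hi; apply/negbTE; apply/eqP => h; move: hi; rewrite -h /= ltnn. Qed.
Lemma y1_neq (i : 'I_e.+3) : (val i < e)%N -> (y1 == i) = false.
Proof. by move=> hi; apply/negbTE; apply/eqP => h; move: hi; rewrite -h /= ltnNge leqnSn. Qed.
Lemma y2_neq (i : 'I_e.+3) : (val i < e)%N -> (y2 == i) = false.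
Proof. by move=> hi; apply/negbTE; apply/eqP => h; move: hi; rewrite -h /= ltnNge !leqW. Qed.

Lemma y1xl : (y1 == xl) = false.
Proof. by rewrite -val_eqE /= (gtn_eqF (ltnSn e)). Qed.
Lemma y2xl : (y2 == xl) = false.
Proof. by rewrite -val_eqE /= (gtn_eqF (leqW (ltnSn e))). Qed.
Lemma y2y1 : (y2 == y1) = false.
Proof. by rewrite -val_eqE /= (gtn_eqF (ltnSn e.+1)). Qed.
Lemma y1y2 : (y1 == y2) = false.
Proof. by rewrite eq_sym y2y1. Qed.
Lemma xly1 : (xl == y1) = false.
Proof. by rewrite eq_sym y1xl. Qed.
Lemma xly2 : (xl == y2) = false.
Proof. by rewrite eq_sym y2xl. Qed.

Lemma collapse deg : isdeg deg -> forall N (m : mon), w m = N -> mdeg m = e.+1 ->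
  deg m = deg (cm (m xl + w m) (m y1) (m y2)).
Proof.
move=> hd; elim=> [|N IH] m hw hm.
  rewrite hw addn0; congr deg; apply/ffunP => j; rewrite ffunE.
  case: (ltnP (val j) e) => hj.
    move: hw; rewrite /w (bigD1 (Ordinal hj)) //= => /eqP; rewrite addn_eq0 => /andP [/eqP h _].
    by rewrite -h; congr (m _); apply: val_inj.
  case: eqP => hje; first by congr (m _); apply: val_inj.
  case: eqP => hje1; first by congr (m _); apply: val_inj.
  congr (m _); apply: val_inj => /=.
  have := ltn_ord j; rewrite ltnS leq_eqVlt => /orP [/eqP //|].
  rewrite ltnS leq_eqVlt => /orP [/eqP //|]; rewrite ltnS leq_eqVlt => /orP [/eqP //|].
  by rewrite ltnNge hj.
case: (pickP (fun k : 'I_e => 0 < m (wx k))%N) => [k hk|hnone]; last first.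
  by move: hw; rewrite /w big1 // => k; move: (hnone k) => /= /negbT; rewrite lt0n negbK => /eqP.
set m' : mon := [ffun i => if i == wx k then (m i).-1 else m i].
have hmm : mshift m' (wx k) = m.
  apply/ffunP => i; rewrite !ffunE; case: eqP => [->|]; last by rewrite addn0.
  by rewrite addn1 prednK.
have hk' : (val (wx k) < e)%N by rewrite /= ltn_ord.
have hdm' : mdeg m' = e by have := mdeg_shift m' (wx k); rewrite hmm hm => -[].
set m'' := mshift m' xl.
have E : deg m = deg m'' by rewrite -{1}hmm (@relx' deg m' (wx k) hd hdm' hk').
have hw' : w m' = N by apply/eq_add_S; rewrite -hw -hmm w_shift hk' addn1.
have hw'' : w m'' = N by rewrite /m'' w_shift /= ltnn addn0.
have hd'' : mdeg m'' = e.+1 by rewrite /m'' mdeg_shift hdm'.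
rewrite E (IH m'' hw'' hd'') hw'' hw.
have -> : m'' xl = (m xl).+1 by rewrite !ffunE eqxx (xl_neq _ hk') addn1.
have -> : m'' y1 = m y1 by rewrite !ffunE (y1_neq _ hk') y1xl addn0.
have -> : m'' y2 = m y2 by rewrite !ffunE (y2_neq _ hk') y2xl addn0.
by rewrite addSnnS.
Qed.


Lemma mdeg_mind (S : {set 'I_e.+3}) : mdeg (mind S) = #|S|.
Proof.
rewrite /mdeg -sum1_card [RHS]big_mkcond /=; apply: eq_bigr => i _; rewrite ffunE.
by case: (i \in S).
Qed.

Lemma cm_xl h p q : cm h p q xl = h. Proof. by rewrite ffunE /= ltnn eqxx. Qed.
Lemma cm_y1 h p q : cm h p q y1 = p.
Proof. by rewrite ffunE /= ltnNge leqnSn /= (gtn_eqF (ltnSn e)) eqxx. Qed.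
Lemma cm_y2 h p q : cm h p q y2 = q.
Proof. by rewrite ffunE /= ltnNge !leqW //= (gtn_eqF (leqW (ltnSn e))) (gtn_eqF (ltnSn e.+1)). Qed.
Lemma cm_w h p q : w (cm h p q) = 0%N.
Proof. by rewrite /w big1 // => i _; rewrite ffunE /= ltn_ord. Qed.
Lemma cm_deg h p q : mdeg (cm h p q) = (h + p + q)%N.
Proof. by rewrite mdeg_split cm_w cm_xl cm_y1 cm_y2. Qed.

Definition D (deg : mon -> rat) p q := deg (cm (e.+1 - p - q) p q).

Lemma red deg (m : mon) : isdeg deg -> mdeg m = e.+1 -> deg m = D deg (m y1) (m y2).
Proof.
move=> hd hm; rewrite (@collapse deg hd _ m erefl hm) /D; congr (deg (cm _ _ _)).
by have := mdeg_split m; rewrite hm; lia.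
Qed.

Lemma vanish deg (m : mon) : isdeg deg -> mdeg m = e.+1 -> (0 < m y1)%N -> (0 < m y2)%N ->
  deg m = 0.
Proof.
move=> [H1 _ _] hm h1 h2; apply: H1 => //; rewrite /Xcone negb_and !negbK; apply/orP; right.
apply/subsetP => i; rewrite !inE => hi.
have : (val i == e.+1) || (val i == e.+2).
  have := ltn_ord i; rewrite ltnS leq_eqVlt => /orP [->|]; first by rewrite orbT.
  by rewrite ltnS => h; rewrite eqn_leq h hi.
case/orP => /eqP hv.
  by rewrite (_ : i = y1) -?lt0n //; apply: val_inj.
by rewrite (_ : i = y2) -?lt0n //; apply: val_inj.
Qed.


Lemma w_mind (S : {set 'I_e.+3}) : (forall i : 'I_e, wx i \in S) -> w (mind S) = e.
Proof.
move=> H; rewrite /w (eq_bigr (fun=> 1%N)) ?sum_nat_const ?card_ord ?muln1 //.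
by move=> i _; rewrite ffunE H.
Qed.

Lemma D00 deg : isdeg deg -> D deg 0 0 = 0.
Proof.
move=> hd; set X := [set i : 'I_e.+3 | (i < e.+1)%N].
have hw : w (mind X) = e by apply: w_mind => i; rewrite inE /=; exact: (ltnW (ltn_ord i)).
have hdeg : mdeg (mind X) = e.+1.
  by rewrite mdeg_split hw !ffunE !inE /= ltnSn ltnn ltnNge leqnSn addn0 addn0 addn1.
have := @red deg (mind X) hd hdeg; rewrite !ffunE !inE /= ltnn ltnNge leqnSn /= => <-.
case: hd => [H1 _ _]; apply: H1 => //.
rewrite /Xcone negb_and !negbK; apply/orP; left; apply/subsetP => i hi.
by rewrite inE ffunE hi.
Qed.

Lemma D10 deg : isdeg deg -> D deg 1 0 = 1.
Proof.
move=> hd; set S := [set i : 'I_e.+3 | (i < e)%N || (i == y1)].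
have hw : w (mind S) = e by apply: w_mind => i; rewrite inE /= ltn_ord.
have hxl : (xl \in S) = false by rewrite inE /= ltnn xly1.
have hy1 : (y1 \in S) by rewrite inE eqxx orbT.
have hy2 : (y2 \in S) = false by rewrite inE /= ltnNge !leqW //= y2y1.
have hdeg : mdeg (mind S) = e.+1.
  by rewrite mdeg_split hw !ffunE hxl hy1 hy2 addn0 addn0 addn1.
have := @red deg (mind S) hd hdeg; rewrite !ffunE hy1 hy2 => <-.
case: hd => [_ _ H3]; apply: H3; last by rewrite -mdeg_mind.
rewrite /Xcone; apply/andP; split; apply/negP => /subsetP H.
  by move: (H xl); rewrite hxl inE /= ltnSn => /(_ isT).
by move: (H y2); rewrite hy2 inE /= => /(_ (leqW (ltnSn e))).
Qed.

Lemma D01 deg : isdeg deg -> D deg 0 1 = 1.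
Proof.
move=> hd; set S := [set i : 'I_e.+3 | (i < e)%N || (i == y2)].
have hw : w (mind S) = e by apply: w_mind => i; rewrite inE /= ltn_ord.
have hxl : (xl \in S) = false by rewrite inE /= ltnn xly2.
have hy2 : (y2 \in S) by rewrite inE eqxx orbT.
have hy1 : (y1 \in S) = false by rewrite inE /= ltnNge leqW //= y1y2.
have hdeg : mdeg (mind S) = e.+1.
  by rewrite mdeg_split hw !ffunE hxl hy1 hy2 /=; lia.
have := @red deg (mind S) hd hdeg; rewrite !ffunE hy1 hy2 => <-.
case: hd => [_ _ H3]; apply: H3; last by rewrite -mdeg_mind.
rewrite /Xcone; apply/andP; split; apply/negP => /subsetP H.
  by move: (H xl); rewrite hxl inE /= ltnSn => /(_ isT).
by move: (H y1); rewrite hy1 inE /= ltnSn => /(_ isT).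
Qed.


Lemma mshiftE (m : mon) i j : mshift m i j = (m j + (j == i))%N.
Proof. by rewrite ffunE. Qed.

Lemma Drel deg p q : isdeg deg -> (p + q <= e)%N ->
  a%:R * D deg p q + D deg p.+1 q - D deg p q.+1 = 0.
Proof.
move=> hd hpq; set m0 := cm (e - p - q) p q.
have hm0 : mdeg m0 = e by rewrite cm_deg; lia.
have := @rely deg m0 hd hm0.
rewrite (@red deg (mshift m0 xl) hd) ?mdeg_shift ?hm0 //.
rewrite (@red deg (mshift m0 y1) hd) ?mdeg_shift ?hm0 //.
rewrite (@red deg (mshift m0 y2) hd) ?mdeg_shift ?hm0 //.
by rewrite !mshiftE !cm_y1 !cm_y2 y1xl y2xl !eqxx y1y2 y2y1 /= !addn0 !addn1.
Qed.

Lemma Dboth deg p q : isdeg deg -> (0 < p)%N -> (0 < q)%N -> (p + q <= e.+1)%N ->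
  D deg p q = 0.
Proof.
move=> hd hp hq hpq; apply: (@vanish deg) => //; rewrite ?cm_y1 ?cm_y2 //.
rewrite cm_deg; lia.
Qed.

Lemma DV deg p q : isdeg deg -> (p + q <= e.+1)%N -> D deg p q = V p q.
Proof.
move=> hd; case: p => [|p]; case: q => [|q] hpq.
- by rewrite D00.
- elim: q hpq => [|q IH] hpq; first by rewrite D01 /V.
  have := @Drel deg 0 q.+1 hd hpq; rewrite (@Dboth deg 1 q.+1) //; try lia.
  rewrite addr0 IH; try lia.
  move/eqP; rewrite subr_eq0 => /eqP <-; by rewrite /V /= exprS.
- elim: p hpq => [|p IH] hpq; first by rewrite D10 /V.
  have := @Drel deg p.+1 0 hd; move=> /(_ ltac:(lia)).
  rewrite (@Dboth deg p.+1 1) //; try lia.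
  rewrite subr0 IH; try lia.
  move/eqP; rewrite addrC addr_eq0 => /eqP ->; by rewrite /V /= exprS mulNr.
- by rewrite Dboth /V.
Qed.

Lemma uniq_deg deg (m : mon) : isdeg deg -> mdeg m = e.+1 -> deg m = V (m y1) (m y2).
Proof.
move=> hd hm; rewrite (@red deg m hd hm) (@DV deg) //.
by have := mdeg_split m; rewrite hm; lia.
Qed.


Lemma Ychar (i : 'I_e.+3) : (e.+1 <= val i)%N -> i = y1 \/ i = y2.
Proof.
move=> hi; have := ltn_ord i; rewrite ltnS leq_eqVlt => /orP [/eqP h|h].
  by right; apply: val_inj.
by left; apply: val_inj => /=; apply/eqP; rewrite eqn_leq hi -ltnS h.
Qed.

Lemma cardX : #|[set i : 'I_e.+3 | (i < e.+1)%N]| = e.+1.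
Proof.
set X := [set i : 'I_e.+3 | (i < e.+1)%N].
have hw : w (mind X) = e by apply: w_mind => i; rewrite inE /=; exact: (ltnW (ltn_ord i)).
rewrite -mdeg_mind mdeg_split hw !ffunE !inE /= ltnSn ltnn ltnNge leqnSn /=; lia.
Qed.

Lemma Vrel p q : a%:R * V p q + V p.+1 q - V p q.+1 = 0 :> rat.
Proof.
rewrite /V /=; case: p => [|p]; case: q => [|q] /=; rewrite ?exprS; ring.
Qed.

Definition deg0 (m : mon) : rat := V (m y1) (m y2).

Lemma deg0_ok : isdeg deg0.
Proof.
split.
- move=> m hm; rewrite /Xcone negb_and !negbK => /orP [HX|HY].
    have hxl : (0 < m xl)%N.
      by have := subsetP HX xl; rewrite !inE /= ltnSn lt0n => /(_ isT).
    have hw : (e <= w m)%N.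
      have : (\sum_(i < e) 1 <= w m)%N.
        apply: leq_sum => i _; have := subsetP HX (wx i); rewrite !inE /= lt0n.
        by apply; exact: (ltnW (ltn_ord i)).
      by rewrite sum_nat_const card_ord muln1.
    have := mdeg_split m; rewrite hm => h.
    rewrite /deg0; have -> : m y1 = 0%N by lia.
    by have -> : m y2 = 0%N by lia.
  have := subsetP HY y1; have := subsetP HY y2; rewrite !inE /=.
  rewrite /deg0 /V => /(_ (leqW (ltnSn e))) h2 /(_ (ltnSn e)) h1.
  by rewrite !lt0n h1 h2.
- move=> m u hm.
  under eq_bigr => i _ do rewrite rmorph_sum mulr_suml.
  rewrite exchange_big /=; apply: big1 => j _.
  under eq_bigr => i _ do rewrite intrM -mulrA.
  rewrite -mulr_sumr (sumX (fun i => deg0 (mshift m i))).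
  case: ifP => hj; last first.
    by rewrite /deg0 !mshiftE y1xl y2xl !eqxx y1y2 y2y1 /= !addn0 !addn1 Vrel mulr0.
  have hj' : (val (xj j) < e)%N by [].
  by rewrite /deg0 !mshiftE (y1_neq _ hj') (y2_neq _ hj') y1xl y2xl subrr mulr0.
- move=> S hS hcard; rewrite /deg0 !ffunE.
  move: hS; rewrite /Xcone => /andP [hX hY].
  case h1: (y1 \in S); case h2: (y2 \in S) => //.
  + case/negP: hY; apply/subsetP => i; rewrite inE => /Ychar [] ->; by [].
  exfalso; set X := [set i : 'I_e.+3 | (i < e.+1)%N].
  have sub : S \subset X.
    apply/subsetP => i hi; rewrite inE ltnNge; apply/negP => /Ychar [] hh.
      by move: hi; rewrite hh h1.
    by move: hi; rewrite hh h2.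
  have := (subset_leqif_cards sub).2; rewrite hcard cardX eqxx => /esym /eqP hSX.
  by case/negP: hX; rewrite hSX; apply/subsetP.
Qed.


Lemma chsum deg k (S : {set 'I_e.+3}) : isdeg deg -> (#|S| + k)%N = e.+1 ->
  \sum_i deg [ffun j => (k * (j == i) + (j \in S))%N] =
  (e.+1)%:R * V (y1 \in S) (y2 \in S) + V (k + (y1 \in S)) (y2 \in S)
    + V (y1 \in S) (k + (y2 \in S)).
Proof.
move=> hd hSk.
have hm : forall i, mdeg [ffun j => (k * (j == i) + (j \in S))%N] = e.+1.
  move=> i; rewrite -[in RHS]hSk -mdeg_mind /mdeg; under eq_bigr do rewrite ffunE.
  rewrite big_split /= -big_distrr /= (sum_ind _ xpredT) muln1 addnC; congr (_ + _)%N.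
  by apply: eq_bigr => j _; rewrite ffunE.
under eq_bigr => i _ do rewrite (@uniq_deg deg _ hd (hm i)) !ffunE.
rewrite big_ord_recr /= big_ord_recr /=.
have ->: widen_ord (leqnSn e.+2) (@ord_max e.+1) = y1 by apply: val_inj.
have ->: (@ord_max e.+2) = y2 by apply: val_inj.
rewrite !eqxx y1y2 y2y1 !muln0 !muln1 !add0n; congr (_ + _ + _).
rewrite (eq_bigr (fun _ => V (y1 \in S) (y2 \in S))); last first.
  move=> i _; rewrite -!val_eqE /= (@gtn_eqF i e.+1 (ltn_ord i)) (@gtn_eqF i e.+2 (leqW (ltn_ord i))).
  by rewrite !muln0 !add0n.
by rewrite sumr_const card_ord mulr_natl.
Qed.

End X.

Lemma negpow (a n : nat) :
  (- (a%:R : rat)) ^+ n = if odd n then - a%:R ^+ n else a%:R ^+ n.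
Proof. by rewrite exprNn -signr_odd; case: (odd n); rewrite ?expr1 ?expr0 ?mulN1r ?mul1r. Qed.

Theorem proposition4p2 (d k a : nat) :
  (3 <= k)%N -> (k < d)%N -> (1 <= a)%N -> (a ^ k < d)%N ->
  (exists deg, is_degree_map (@Xgen d a) (@Xcone d) deg) /\
  (forall deg, is_degree_map (@Xgen d a) (@Xcone d) deg ->
     (odd k -> ch_positive d (@Xcone d) deg k) /\
     (~~ odd k -> ch_nef d (@Xcone d) deg k /\ ~ ch_positive d (@Xcone d) deg k)).
Proof.
move=> hk hkd ha hak.
case: d hkd hak => [//|e] hkd hak.
split; first by exists (deg0 e a); exact: deg0_ok.
move=> deg hd.
case: k hk hkd hak => [//|k] hk hkd hak.
have hfact : 0 < ((k.+1)`!%:R : rat)^-1 by rewrite invr_gt0 ltr0n fact_gt0.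
have hA : 0 < (a%:R : rat) ^+ k by rewrite exprn_gt0 // ltr0n.
have hA1 : 0 < (a%:R : rat) ^+ k.+1 by rewrite exprn_gt0 // ltr0n.
have hAk : (a%:R : rat) ^+ k.+1 < (e.+1)%:R by rewrite -natrX ltr_nat.
have key : forall S, Xcone S -> (#|S| + k.+1)%N = e.+1 ->
  ch_dot deg k.+1 S = ((k.+1)`!%:R)^-1 *
    (if y1 e \in S then (e.+1)%:R + (- (a%:R : rat)) ^+ k.+1
     else if y2 e \in S then (e.+1)%:R + (a%:R : rat) ^+ k.+1
     else (- (a%:R : rat)) ^+ k + a%:R ^+ k).
  move=> S hS hc; rewrite /ch_dot (@chsum e a deg k.+1 S hd hc); congr (_ * _).
  case h1: (y1 e \in S); case h2: (y2 e \in S) => /=.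
  - exfalso; move: hS; rewrite /Xcone => /andP [_ /negP []].
    by apply/subsetP => i; rewrite inE => /Ychar [] ->.
  - by rewrite /V /= addn1 /= mulr1 addr0.
  - by rewrite /V /= addn1 /= mulr1 addr0.
  - by rewrite /V /= addn0 mulr0 add0r.
split.
- move=> /= ho S hS hc; rewrite key //; apply: mulr_gt0 => //.
  rewrite !negpow /= (negbTE ho) /=.
  case: ifP => _; first by lra.
  by case: ifP => _; lra.
- move=> /= he; split.
    move=> S hS hc; rewrite key //; apply: mulr_ge0; first exact: ltW.
    rewrite !negpow /= (negPn he) /=.
    case: ifP => _; first by lra.
    by case: ifP => _; lra.
  set S0 := [set i : 'I_e.+3 | (i < e.+1 - k.+1)%N].
  have hle : (e.+1 - k.+1 <= e.+3)%N by lia.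
  have hcard : #|S0| = (e.+1 - k.+1)%N.
    have -> : S0 = widen_ord hle @: [set: 'I_(e.+1 - k.+1)].
      apply/setP => i; rewrite inE; apply/idP/imsetP => [hi|[j _ ->] /=].
        by exists (Ordinal hi) => //; apply: val_inj.
      exact: ltn_ord.
    rewrite card_imset ?cardsT ?card_ord //.
    by move=> x y /(congr1 val) /= /val_inj.
  have hS0 : Xcone S0.
    rewrite /Xcone; apply/andP; split; apply/negP => /subsetP H.
      have := H (xl e); rewrite !inE /= ltnSn => /(_ isT); lia.
    have := H (y1 e); rewrite !inE /= ltnSn => /(_ isT); lia.
  move=> H; have hc0 : (#|S0| + k.+1)%N = e.+1 by rewrite hcard; lia.
  have := H S0 hS0 hc0; rewrite key //.
  have -> : (y1 e \in S0) = false by rewrite inE /=; apply/negbTE; rewrite -leqNgt; lia.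
  have -> : (y2 e \in S0) = false by rewrite inE /=; apply/negbTE; rewrite -leqNgt; lia.
  rewrite negpow /= (negPn he) /=.
  by rewrite addrC subrr mulr0 ltxx.
Qed.
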